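(* Let $\pi$ be a policy on a finite state space $\mathcal{S}$ whose induced Markov chain with transition matrix $P^\pi$ is irreducible and aperiodic, with stationary distribution $\mu^\pi$, and let $\lambda\in[0,1)$. Let $\Phi\in\mathbb{R}^{|\mathcal{S}|\times d}$ have full column rank. Then the solution set of the projected Bellman equation $\Phi\theta=\Pi_{D,W_\Phi}\mathcal{T}^{(\lambda)}(\Phi\theta)$ is $\mathcal{L}_{\Phi,e}:=\theta^*+S_{\Phi,e}$, where $\theta^*\in E_{\Phi,e}$ is the unique solution of $\Phi\theta=\Pi_{D,W_{E_{\Phi,e}}}\mathcal{T}^{(\lambda)}(\Phi\theta)$.
   Context: $\mathcal{R}^\pi\in\mathbb{R}^{|\mathcal{S}|}$ is the reward vector under $\pi$, $r(\pi)=(\mu^\pi)^\top\mathcal{R}^\pi$, $e$ the all-ones vector. Bellman operator $\mathcal{T}(v)=\mathcal{R}^\pi-r(\pi)e+P^\pi v$; $\mathcal{T}^m$ is its $m$-fold composition; $\mathcal{T}^{(\lambda)}(v)=(1-\lambda)\sum_{m=0}^\infty\lambda^m\mathcal{T}^{m+1}(v)$. $D=\mathrm{diag}(\mu^\pi)$, $\|x\|_D=\sqrt{x^\top Dx}$. $W_\Phi=\{\Phi\theta:\theta\in\mathbb{R}^d\}$ and $\Pi_{D,W}$ denotes the $\|\cdot\|_D$-orthogonal projection onto a subspace $W$. $S_{\Phi,e}=\mathrm{span}\{\theta\in\mathbb{R}^d:\Phi\theta=e\}$ (equal to $\{c\theta_e:c\in\mathbb{R}\}$ if some $\theta_e$ satisfies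 $\Phi\theta_e=e$, and $\{0\}$ otherwise); $E_{\Phi,e}$ is the orthogonal complement of $S_{\Phi,e}$ in $\mathbb{R}^d$; $W_{E_{\Phi,e}}=\{\Phi\theta:\theta\in E_{\Phi,e}\}$. *)

(* Defs.v *)
From HB Require Import structures.
From mathcomp Require Import all_boot all_order all_algebra.
From mathcomp Require Import all_classical all_reals all_analysis.
Set Implicit Arguments. Unset Strict Implicit. Unset Printing Implicit Defensive.
Import Order.TTheory GRing.Theory Num.Theory.
Import numFieldNormedType.Exports.
Local Open Scope ring_scope.
Local Open Scope classical_set_scope.

Section Defs.
Variables (R : realType) (n : nat).

Definition stochastic (P : 'M[R]_n) : Prop :=
  (forall i j, 0 <= P i j) /\ (forall i, \sum_j P i j = 1).

Definition irreducible (P : 'M[R]_n) : Prop :=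
  forall i j, exists k : nat, 0 < (P ^+ k) i j.

(* aperiodic: for every state, the gcd of the return times {k>0 | P^k i i > 0}
   is 1, i.e. no integer d > 1 divides all of them *)
Definition aperiodic (P : 'M[R]_n) : Prop :=
  forall (i : 'I_n) (d : nat), (1 < d)%N ->
    ~ (forall k : nat, (0 < k)%N -> 0 < (P ^+ k) i i -> (d %| k)%N).

Definition stationary_dist (P : 'M[R]_n) (mu : 'rV[R]_n) : Prop :=
  (forall i, 0 <= mu 0 i) /\ \sum_i mu 0 i = 1 /\ mu *m P = mu.

Definition ones : 'cV[R]_n := const_mx 1.

Definition avg_reward (mu : 'rV[R]_n) (Rv : 'cV[R]_n) : R := (mu *m Rv) 0 0.

Definition bellman (P : 'M[R]_n) (mu : 'rV[R]_n) (Rv : 'cV[R]_n) (v : 'cV[R]_n)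
  : 'cV[R]_n := Rv - avg_reward mu Rv *: ones + P *m v.

Definition bellman_lambda (P : 'M[R]_n) (mu : 'rV[R]_n) (Rv : 'cV[R]_n)
  (lam : R) (v : 'cV[R]_n) : 'cV[R]_n :=
  \col_i limn ((series (fun m : nat =>
     (1 - lam) * lam ^+ m * (iter m.+1 (bellman P mu Rv) v) i 0)) : R^nat).

(* D-weighted inner product <x, y>_D = x^T diag(mu) y *)
Definition inner_D (mu : 'rV[R]_n) (x y : 'cV[R]_n) : R :=
  \sum_i mu 0 i * x i 0 * y i 0.

Definition is_projD (mu : 'rV[R]_n) (W : set 'cV[R]_n) (x p : 'cV[R]_n) : Prop :=
  W p /\ forall w, W w -> inner_D mu (x - p) w = 0.

End Defs.

Section Feat.
Variables (R : realType) (n d : nat) (Phi : 'M[R]_(n, d)).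

Definition W_of (A : set 'cV[R]_d) : set 'cV[R]_n := [set Phi *m t | t in A].

Definition dotd (s t : 'cV[R]_d) : R := \sum_i s i 0 * t i 0.

Definition S_Phi_e : set 'cV[R]_d :=
  [set t | exists (k : nat) (c : 'I_k -> R) (v : 'I_k -> 'cV[R]_d),
     (forall i, Phi *m v i = ones R n) /\ t = \sum_i c i *: v i].

Definition E_Phi_e : set 'cV[R]_d :=
  [set t | forall s, S_Phi_e s -> dotd s t = 0].

End Feat.

(* Main.v *)
Require Import Defs.
From HB Require Import structures.
From mathcomp Require Import all_boot all_order all_algebra.
From mathcomp Require Import all_classical all_reals all_analysis.
From mathcomp Require Import ring lra.
Import Order.TTheory GRing.Theory Num.Theory.
Import numFieldNormedType.Exports.
Local Open Scope ring_scope.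
Local Open Scope classical_set_scope.
Set Implicit Arguments. Unset Strict Implicit.
Section Inner.
Variables (R : realType) (n : nat).
Implicit Types (mu : 'rV[R]_n) (x y z : 'cV[R]_n).

Lemma innerC mu x y : inner_D mu x y = inner_D mu y x.
Proof. by apply: eq_bigr => i _; ring. Qed.

Lemma innerDl mu x y z : inner_D mu (x + y) z = inner_D mu x z + inner_D mu y z.
Proof. rewrite /inner_D -big_split; apply: eq_bigr => i _; rewrite !mxE /=; ring. Qed.

Lemma innerZl mu a x y : inner_D mu (a *: x) y = a * inner_D mu x y.
Proof. rewrite /inner_D mulr_sumr; apply: eq_bigr => i _; rewrite !mxE; ring. Qed.

Lemma innerNl mu x y : inner_D mu (- x) y = - inner_D mu x y.
Proof. by rewrite -scaleN1r innerZl mulN1r. Qed.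

Lemma innerBl mu x y z : inner_D mu (x - y) z = inner_D mu x z - inner_D mu y z.
Proof. by rewrite innerDl innerNl. Qed.

Lemma innerDr mu x y z : inner_D mu z (x + y) = inner_D mu z x + inner_D mu z y.
Proof. by rewrite innerC innerDl !(innerC mu z). Qed.

Lemma innerZr mu a x y : inner_D mu y (a *: x) = a * inner_D mu y x.
Proof. by rewrite innerC innerZl innerC. Qed.

Lemma innerBr mu x y z : inner_D mu z (x - y) = inner_D mu z x - inner_D mu z y.
Proof. by rewrite innerC innerBl !(innerC mu z). Qed.

Lemma inner0l mu y : inner_D mu 0 y = 0.
Proof. by rewrite -(scale0r (0 : 'cV_n)) innerZl mul0r. Qed.

Lemma innerE mu x y : inner_D mu x y = (y^T *m diag_mx mu *m x) 0 0.
Proof.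
rewrite /inner_D mul_mx_diag mxE; apply: eq_bigr => i _; rewrite !mxE; ring.
Qed.

Lemma inner_onesl mu y : inner_D mu (ones R n) y = (mu *m y) 0 0.
Proof. rewrite /inner_D mxE; apply: eq_bigr => i _; rewrite !mxE; ring. Qed.

Lemma inner_ge0 mu x : (forall i, 0 <= mu 0 i) -> 0 <= inner_D mu x x.
Proof.
move=> h; apply: sumr_ge0 => i _; rewrite -mulrA mulr_ge0 ?h //.
by rewrite -expr2 sqr_ge0.
Qed.

Lemma inner_eq0 mu x : (forall i, 0 < mu 0 i) -> inner_D mu x x = 0 -> x = 0.
Proof.
move=> h /eqP; rewrite psumr_eq0 => [/allP H|i _]; last first.
  by rewrite -mulrA mulr_ge0 ?(ltW (h i)) // -expr2 sqr_ge0.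
apply/matrixP => i j; rewrite ord1 mxE.
have := H i (mem_index_enum _); rewrite -mulrA mulf_eq0 gt_eqF //=.
by rewrite -expr2 sqrf_eq0 => /eqP.
Qed.

End Inner.
Section Stoch.
Variables (R : realType) (n : nat).
Implicit Types (P Q : 'M[R]_n) (mu : 'rV[R]_n) (x y z w : 'cV[R]_n).

Lemma stoch_ones P : stochastic P -> P *m ones R n = ones R n.
Proof.
case=> _ h; apply/matrixP => i j; rewrite !mxE -[RHS](h i).
by apply: eq_bigr => k _; rewrite !mxE mulr1.
Qed.

Lemma stoch_pow P k : stochastic P ->
  (forall i j, 0 <= (P ^+ k) i j) /\ P ^+ k *m ones R n = ones R n.
Proof.
move=> hP; elim: k => [|k [IH1 IH2]].
  by split; [move=> i j; rewrite expr0 mxE; case: (i == j) | rewrite expr0 mul1mx].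
rewrite exprS -mulmxE; split; last by rewrite -mulmxA IH2 stoch_ones.
move=> i j; rewrite mxE; apply: sumr_ge0 => l _; apply: mulr_ge0 => //.
by case: hP.
Qed.

Lemma stat_pow P mu k : stationary_dist P mu -> mu *m P ^+ k = mu.
Proof.
case=> _ [_ h]; elim: k => [|k IH]; first by rewrite expr0 mulmx1.
by rewrite exprSr -mulmxE mulmxA IH h.
Qed.

Lemma fix_pow P w k : P *m w = w -> P ^+ k *m w = w.
Proof.
move=> h; elim: k => [|k IH]; first by rewrite expr0 mul1mx.
by rewrite exprS -mulmxE -mulmxA IH h.
Qed.

Lemma jensen Q w i : (forall i j, 0 <= Q i j) -> Q *m ones R n = ones R n ->
  ((Q *m w) i 0) ^+ 2 <= (Q *m map_mx (fun a => a ^+ 2) w) i 0.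
Proof.
move=> h0 h1; set m := (Q *m w) i 0.
have s1 : \sum_j Q i j = 1.
  have := congr1 (fun M : 'cV[R]_n => M i 0) h1; rewrite !mxE => <-.
  by apply: eq_bigr => j _; rewrite mxE mulr1.
have : 0 <= \sum_j Q i j * (w j 0 - m) ^+ 2.
  by apply: sumr_ge0 => j _; rewrite mulr_ge0 ?sqr_ge0.
have -> : \sum_j Q i j * (w j 0 - m) ^+ 2 =
   (Q *m map_mx (fun a => a ^+ 2) w) i 0 - 2 * m * m + m ^+ 2 * \sum_j Q i j.
  rewrite mxE; have e2 : m = \sum_j Q i j * w j 0 by rewrite /m mxE.
  rewrite {3}e2 !mulr_sumr -sumrN -!big_split /=.
  by apply: eq_bigr => j _; rewrite mxE; ring.
rewrite s1 mulr1 expr2; lra.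
Qed.

Lemma contract P mu w : stochastic P -> stationary_dist P mu ->
  inner_D mu (P *m w) (P *m w) <= inner_D mu w w.
Proof.
move=> hP hmu.
have hm : forall i, 0 <= mu 0 i by case: hmu.
apply: (@le_trans _ _ (\sum_i mu 0 i * (P *m map_mx (fun a => a ^+ 2) w) i 0)).
  apply: ler_sum => i _; rewrite -mulrA ler_wpM2l // -expr2.
  by apply: jensen; [case: hP | apply: stoch_ones].
have e : mu *m P = mu by case: hmu => _ [].
rewrite /inner_D; under eq_bigr do rewrite mxE mulr_sumr.
rewrite exchange_big /= le_eqVlt; apply/orP; left; apply/eqP; apply: eq_bigr => j _.
have := congr1 (fun M : 'rV[R]_n => M 0 j) e; rewrite mxE => <-.
rewrite !mulr_suml; apply: eq_bigr => i _; rewrite !mxE; ring.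
Qed.

Lemma mu_pos P mu : stochastic P -> irreducible P -> stationary_dist P mu ->
  forall j, 0 < mu 0 j.
Proof.
move=> hP hI hmu j.
have [hm [hs _]] := hmu.
have [i hi] : exists i, 0 < mu 0 i.
  apply/not_existsP => H.
  have : \sum_i mu 0 i = 0.
    by apply: big1 => i _; apply/eqP; rewrite eq_le hm andbT leNgt; apply/negP => /(H i).
  by rewrite hs => /eqP; rewrite oner_eq0.
have [k hk] := hI i j.
have := congr1 (fun M : 'rV[R]_n => M 0 j) (stat_pow k hmu); rewrite mxE => <-.
rewrite (bigD1 i) //=; apply: ltr_wpDr.
  apply: sumr_ge0 => l _; apply: mulr_ge0 => //; by case: (stoch_pow k hP).
exact: mulr_gt0.
Qed.

Lemma max_principle P w (j0 : 'I_n) : stochastic P -> irreducible P ->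
  P *m w = w -> w = w j0 0 *: ones R n.
Proof.
move=> hP hI hw.
case: (@arg_maxP _ _ _ j0 xpredT (fun i => w i 0) isT) => m _ Hm.
suff H : forall j, w j 0 = w m 0.
  apply/matrixP => i l; rewrite ord1 !mxE !H; ring.
move=> j; have [k hk] := hI m j.
have [h0 h1] := stoch_pow k hP.
set Q := P ^+ k in hk h0 h1.
have hQ : Q *m w = w by apply: fix_pow.
have s1 : \sum_l Q m l = 1.
  have := congr1 (fun M : 'cV[R]_n => M m 0) h1; rewrite !mxE => <-.
  by apply: eq_bigr => l _; rewrite mxE mulr1.
have hs : \sum_l Q m l * (w m 0 - w l 0) = 0.
  have e : \sum_l Q m l * w l 0 = w m 0.
    by have := congr1 (fun M : 'cV[R]_n => M m 0) hQ; rewrite mxE.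
  rewrite (eq_bigr (fun l => Q m l * w m 0 - Q m l * w l 0)); last by move=> l _; rewrite mulrBr.
  by rewrite sumrB -mulr_suml s1 mul1r e subrr.
have ge : forall l, 0 <= Q m l * (w m 0 - w l 0).
  by move=> l; rewrite mulr_ge0 // subr_ge0; apply: Hm.
have /(_ j isT) /eqP := psumr_eq0P (fun l _ => ge l) hs.
rewrite mulf_eq0 gt_eqF //= subr_eq0.
by move/eqP.
Qed.

End Stoch.
Section NLam.
Variable R : realType.

Lemma nexp_bound (r : R) (N : nat) : 0 <= r -> r < 1 ->
  N%:R * r ^+ N * (1 - r) <= 1 - r ^+ N.
Proof.
move=> r0 r1; elim: N => [|N IH]; first by rewrite mul0r mul0r expr0 subrr.
have t0 : 0 <= r ^+ N by rewrite exprn_ge0.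
have t1 : r ^+ N <= 1 by rewrite exprn_ile1 // ltW.
rewrite exprS -[N.+1]addn1 natrD.
set t := r ^+ N in IH t0 t1 *.
have h1 : r * (N%:R * t * (1 - r)) <= r * (1 - t) by rewrite ler_wpM2l.
have h2 : r * t * (1 - r) <= 1 - r.
  rewrite -[X in _ <= X]mul1r ler_wpM2r ?subr_ge0 ?ltW //.
  by apply: le_lt_trans (ler_wpM2l r0 t1) _; rewrite mulr1.
nra.
Qed.

Lemma cvg_nexp (lam : R) : 0 <= lam -> lam < 1 ->
  (fun N : nat => N%:R * lam ^+ N) @ \oo --> (0 : R).
Proof.
move=> l0 l1.
set rho := (1 + lam) / 2.
have rho0 : 0 < rho by rewrite /rho; lra.
have rho1 : rho < 1 by rewrite /rho; lra.
set r := lam / rho.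
have r0 : 0 <= r by rewrite /r divr_ge0 // ltW.
have r1 : r < 1 by rewrite /r ltr_pdivrMr // mul1r /rho; lra.
have lamE : lam = r * rho by rewrite /r divfK // gt_eqF.
apply: (@squeeze_cvgr _ _ _ _ (cst 0) (geometric ((1 - r)^-1) rho)).
- near=> N; apply/andP; split.
    by rewrite /cst mulr_ge0 // exprn_ge0.
  rewrite /geometric /= lamE exprMn mulrA.
  apply: ler_wpM2r; first by rewrite exprn_ge0 // ltW.
  rewrite -[X in _ <= X]div1r ler_pdivlMr ?subr_gt0 //.
  apply: le_trans (nexp_bound N r0 r1) _.
  by rewrite lerBlDr lerDl exprn_ge0.
- exact: cvg_cst.
- by apply: cvg_geometric; rewrite ger0_norm // ltW.
Unshelve. all: by end_near.
Qed.

End NLam.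
Section LinAlg.
Variable R : realType.

Lemma unit_of_inj n (A : 'M[R]_n) :
  (forall x : 'cV[R]_n, A *m x = 0 -> x = 0) -> A \in unitmx.
Proof.
move=> H; rewrite -unitmx_tr -row_free_unit; apply: inj_row_free => v hv.
have : A *m v^T = 0 by rewrite -(trmxK (A *m v^T)) trmx_mul trmxK hv trmx0.
by move/H => /(congr1 trmx); rewrite trmxK trmx0.
Qed.

Lemma rank_inj n d (Phi : 'M[R]_(n, d)) : \rank Phi = d ->
  forall x : 'cV[R]_d, Phi *m x = 0 -> x = 0.
Proof.
move=> hr x hx.
have rf : row_free Phi^T by rewrite /row_free mxrank_tr hr.
have : x^T *m Phi^T == 0 by rewrite -trmx_mul hx trmx0.
rewrite mulmx_free_eq0 // => /eqP /(congr1 trmx); by rewrite trmxK trmx0.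
Qed.

End LinAlg.

Section Bellman.
Variables (R : realType) (n : nat) (P : 'M[R]_n) (mu : 'rV[R]_n) (Rv : 'cV[R]_n) (lam : R).

Definition cvec := Rv - avg_reward mu Rv *: ones R n.
Definition Nm := 1%:M - lam *: P.
Definition Bm := invmx Nm.

Lemma Nm_unit : stochastic P -> irreducible P -> stationary_dist P mu ->
  0 <= lam -> lam < 1 -> Nm \in unitmx.
Proof.
move=> hP hI hmu l0 l1; apply: unit_of_inj => x hx.
have mpos := mu_pos hP hI hmu.
have ex : x = lam *: (P *m x).
  by apply/eqP; rewrite -subr_eq0 -hx /Nm mulmxBl mul1mx scalemxAl.
have h1 := contract x hP hmu.
have h0 := inner_ge0 (P *m x) (fun i => ltW (mpos i)).
have e : inner_D mu x x = lam ^+ 2 * inner_D mu (P *m x) (P *m x).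
  by rewrite {1 2}ex innerZl innerZr mulrA expr2.
apply: (inner_eq0 mpos).
have h2 : inner_D mu x x <= lam ^+ 2 * inner_D mu x x.
  by rewrite {1}e ler_wpM2l // exprn_ge0.
have h3 := inner_ge0 x (fun i => ltW (mpos i)).
have l2 : lam ^+ 2 < 1 by rewrite expr2; nra.
nra.
Qed.

End Bellman.
Section BellmanLim.
Variables (R : realType) (n : nat) (P : 'M[R]_n) (mu : 'rV[R]_n) (Rv : 'cV[R]_n) (lam : R).

Lemma abs_le_sum (c : 'cV[R]_n) j : `|c j 0| <= \sum_k `|c k 0|.
Proof. by rewrite (bigD1 j) //= lerDl sumr_ge0. Qed.

Lemma bl_formula v : stochastic P -> 0 <= lam -> lam < 1 ->
  Nm P lam \in unitmx ->
  bellman_lambda P mu Rv lam v =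
    Bm P lam *m (cvec mu Rv + (1 - lam) *: (P *m v)).
Proof.
move=> hP l0 l1 hU.
set c := cvec mu Rv.
set B := Bm P lam.
set x := B *m (c + (1 - lam) *: (P *m v)).
pose u m := iter m.+1 (bellman P mu Rv) v.
have uS : forall m, u m.+1 = c + P *m u m by [].
have u0 : u 0%N = c + P *m v by [].
pose s N := \sum_(m < N) ((1 - lam) * lam ^+ m) *: u m.
have hs : forall N, Nm P lam *m s N = (1 - lam) *: (c + P *m v)
    + (lam - lam ^+ N.+1) *: c - ((1 - lam) * lam ^+ N) *: u N.
  elim => [|N IH].
    rewrite /s big_ord0 mulmx0 u0 expr0 expr1 subrr scale0r addr0 mulr1 subrr //.
  rewrite /s big_ord_recr /= -/(s N) mulmxDr IH -scalemxAr /Nm mulmxBl mul1mx.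
  rewrite -scalemxAl -[P *m u N](addKr c) -uS.
  apply/matrixP => i j; rewrite !mxE !exprS; ring.
have sN : forall N, s N = x - B *m (lam ^+ N.+1 *: c + ((1 - lam) * lam ^+ N) *: u N).
  move=> N; rewrite -[s N](mulKmx hU) hs /x -mulmxBr; congr (_ *m _).
  apply/matrixP => i j; rewrite !mxE; ring.
set C := \sum_k `|c k 0|.
set a := \sum_k `|u 0%N k 0|.
have C0 : 0 <= C by apply: sumr_ge0.
have a0 : 0 <= a by apply: sumr_ge0.
have ub : forall N j, `|u N j 0| <= a + N%:R * C.
  elim => [|N IH] j; first by rewrite mul0r addr0 abs_le_sum.
  rewrite uS mxE; apply: (le_trans (ler_normD _ _)).
  rewrite -[N.+1]addn1 natrD mulrDl mul1r addrA addrC lerD ?abs_le_sum //.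
  rewrite mxE; apply: (le_trans (ler_norm_sum _ _ _)).
  have [hP0 hP1] := hP.
  have -> : a + N%:R * C = \sum_k P j k * (a + N%:R * C) by rewrite -mulr_suml hP1 mul1r.
  apply: ler_sum => k _.
  by rewrite normrM ger0_norm // ler_wpM2l.
apply/matrixP => i j; rewrite ord1 mxE.
apply: cvg_lim => //.
set err := fun N => (B *m (lam ^+ N.+1 *: c + ((1 - lam) * lam ^+ N) *: u N)) i 0.
have -> : series (fun m : nat => (1 - lam) * lam ^+ m * (iter m.+1 (bellman P mu Rv) v) i 0)
    = fun N => x i 0 - err N.
  apply/funext => N; rewrite seriesEnat /= big_mkord.
  apply: (@etrans _ _ ((s N) i 0)); last first.
    rewrite sN [LHS]mxE; congr (_ + _); rewrite mxE //.
  by rewrite /s summxE; apply: eq_bigr => m _; rewrite [RHS]mxE.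
rewrite -[X in _ --> X]subr0; apply: cvgB; first exact: cvg_cst.
apply/norm_cvg0P.
set beta := \sum_k `|B i k|.
have beta0 : 0 <= beta by apply: sumr_ge0.
apply: (@squeeze_cvgr _ _ _ _ (cst 0)
   (fun N => beta * ((C + a) * lam ^+ N + C * (N%:R * lam ^+ N)))).
- near=> N; apply/andP; split; first by rewrite /cst normr_ge0.
  rewrite /err mxE; apply: (le_trans (ler_norm_sum _ _ _)).
  rewrite /beta mulr_suml; apply: ler_sum => k _; rewrite normrM ler_wpM2l //.
  have yk : (lam ^+ N.+1 *: c + ((1 - lam) * lam ^+ N) *: u N) k 0 =
      lam ^+ N.+1 * c k 0 + (1 - lam) * lam ^+ N * u N k 0 by rewrite !mxE.
  rewrite yk; apply: (le_trans (ler_normD _ _)).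
  have lN : 0 <= lam ^+ N by rewrite exprn_ge0.
  have lN1 : lam ^+ N.+1 <= lam ^+ N by rewrite exprS ler_piMl // ltW.
  have h1 : `|lam ^+ N.+1 * c k 0| <= lam ^+ N * C.
    rewrite normrM ger0_norm ?exprn_ge0 //.
    apply: (le_trans (ler_wpM2r (normr_ge0 _) lN1)).
    by rewrite ler_wpM2l // abs_le_sum.
  have h2 : `|(1 - lam) * lam ^+ N * u N k 0| <= lam ^+ N * (a + N%:R * C).
    have hl : 0 <= 1 - lam by lra.
    have hl1 : 1 - lam <= 1 by lra.
    rewrite !normrM (ger0_norm hl) (ger0_norm lN).
    rewrite -mulrA; apply: (@le_trans _ _ (lam ^+ N * `|u N k 0|)).
      by rewrite ler_piMl ?mulr_ge0.
    by rewrite ler_wpM2l // ub.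
  apply: (le_trans (lerD h1 h2)).
  rewrite le_eqVlt; apply/orP; left; apply/eqP; ring.
- exact: cvg_cst.
- have -> : (0 : R) = beta * ((C + a) * 0 + C * 0) by rewrite !mulr0 addr0 mulr0.
  apply: cvgMl_tmp; apply: cvgD; apply: cvgMl_tmp.
    by apply: cvg_expr; rewrite ger0_norm.
  exact: cvg_nexp.
Unshelve. all: by end_near.
Qed.

End BellmanLim.
Section Quad.
Variables (R : realType) (n : nat) (P : 'M[R]_n) (mu : 'rV[R]_n) (lam : R).

Definition Lm := (1 - lam) *: (Bm P lam *m P).

Lemma NmP_comm : Nm P lam *m P = P *m Nm P lam.
Proof. by rewrite /Nm mulmxBl mulmxBr mul1mx mulmx1 -scalemxAl -scalemxAr. Qed.

Lemma BP_comm : Nm P lam \in unitmx -> Bm P lam *m P = P *m Bm P lam.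
Proof.
move=> hU; rewrite /Bm.
rewrite -[X in X = _](mulmx1 _) -(mulmxV hU) mulmxA -[invmx _ *m P *m _]mulmxA.
by rewrite -NmP_comm !mulmxA mulVmx // mul1mx.
Qed.

Lemma L_ones : stochastic P -> lam < 1 -> Nm P lam \in unitmx ->
  Lm *m ones R n = ones R n.
Proof.
move=> hP l1 hU.
have e : Nm P lam *m ones R n = (1 - lam) *: ones R n.
  by rewrite /Nm mulmxBl mul1mx -scalemxAl stoch_ones // scalerBl scale1r.
rewrite /Lm -scalemxAl -mulmxA stoch_ones //.
by rewrite -[X in _ = X](mulKmx hU) e -scalemxAr.
Qed.

Lemma mu_L : stationary_dist P mu -> lam < 1 -> Nm P lam \in unitmx ->
  mu *m Lm = mu.
Proof.
move=> hmu l1 hU.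
have hP : mu *m P = mu by case: hmu => _ [].
have e : mu *m Nm P lam = (1 - lam) *: mu.
  by rewrite /Nm mulmxBr mulmx1 -scalemxAr hP scalerBl scale1r.
rewrite /Lm -scalemxAr BP_comm // mulmxA hP.
by rewrite -[X in _ = X](mulmxK hU) e -scalemxAl.
Qed.

Lemma mu_B : lam < 1 -> stationary_dist P mu -> Nm P lam \in unitmx ->
  mu *m Bm P lam = (1 - lam)^-1 *: mu.
Proof.
move=> l1 hmu hU.
have hP : mu *m P = mu by case: hmu => _ [].
have e : mu *m Nm P lam = (1 - lam) *: mu.
  by rewrite /Nm mulmxBr mulmx1 -scalemxAr hP scalerBl scale1r.
have h1 : (1 - lam) != 0 by rewrite subr_eq0 eq_sym lt_eqF.
have e2 : mu = (1 - lam) *: (mu *m Bm P lam) by rewrite scalemxAl -e /Bm mulmxK.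
by rewrite {2}e2 scalerA mulVf // scale1r.
Qed.

Lemma inner_ones_L k v : stationary_dist P mu -> lam < 1 -> Nm P lam \in unitmx ->
  inner_D mu (k *: ones R n) (v - Lm *m v) = 0.
Proof.
move=> hmu l1 hU; rewrite innerZl inner_onesl mulmxBr mulmxA mu_L // subrr.
by rewrite mxE mulr0.
Qed.

Lemma inner_ones_Bc k Rv : stationary_dist P mu -> lam < 1 -> Nm P lam \in unitmx ->
  inner_D mu (k *: ones R n) (Bm P lam *m cvec mu Rv) = 0.
Proof.
move=> hmu l1 hU; rewrite innerZl inner_onesl mulmxA mu_B // -scalemxAl.
have -> : mu *m cvec mu Rv = 0.
  rewrite /cvec mulmxBr -scalemxAr.
  have -> : mu *m ones R n = 1.
    apply/matrixP => i j; rewrite !ord1 !mxE.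
    case: hmu => _ [<- _]; by apply: eq_bigr => l _; rewrite mxE mulr1.
  apply/matrixP => i j; rewrite !ord1 /avg_reward !mxE eqxx mulr1 subrr //.
by rewrite scaler0 mxE mulr0.
Qed.

Lemma coercive v (j0 : 'I_n) : stochastic P -> irreducible P -> stationary_dist P mu ->
  0 <= lam -> lam < 1 -> Nm P lam \in unitmx ->
  0 <= inner_D mu (v - Lm *m v) v /\
  (inner_D mu (v - Lm *m v) v = 0 -> exists k, v = k *: ones R n).
Proof.
move=> hP hI hmu l0 l1 hU.
have mpos := mu_pos hP hI hmu.
have mge : forall i, 0 <= mu 0 i by move=> i; apply: ltW.
set w := Bm P lam *m v.
set p := P *m w.
have vN : v = Nm P lam *m w by rewrite /w /Bm (mulKVmx hU).
have vE : v = w - lam *: p by rewrite {1}vN /Nm mulmxBl mul1mx -scalemxAl.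
have LvE : Lm *m v = (1 - lam) *: p.
  rewrite /Lm -scalemxAl; congr (_ *: _).
  by rewrite -mulmxA {1}vN (mulmxA P) -NmP_comm -mulmxA /Bm (mulKmx hU).
have eq1 : v - Lm *m v = w - p.
  rewrite LvE vE; apply/matrixP => i j; rewrite !mxE; ring.
have hc := contract w hP hmu.
have hd := inner_ge0 (w - p) mge.
have key : inner_D mu (v - Lm *m v) v =
   (1 - lam) / 2 * (inner_D mu w w - inner_D mu p p) + (1 + lam) / 2 * inner_D mu (w - p) (w - p).
  rewrite eq1 {1}vE !innerBl !innerBr !innerZr (innerC mu p w); by field.
have t1 : 0 <= (1 - lam) / 2 * (inner_D mu w w - inner_D mu p p).
  by rewrite mulr_ge0 ?subr_ge0 // divr_ge0 // subr_ge0 ltW.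
have l2 : 0 < (1 + lam) / 2 by lra.
split; first by rewrite key addr_ge0 // mulr_ge0 // ltW.
move=> h0.
have dd : inner_D mu (w - p) (w - p) = 0.
  apply/eqP; rewrite eq_le hd andbT.
  have : (1 + lam) / 2 * inner_D mu (w - p) (w - p) <= 0 by rewrite -h0 key lerDr.
  by rewrite pmulr_rle0.
have wp : P *m w = w.
  by have /eqP := inner_eq0 mpos dd; rewrite subr_eq0 => /eqP e; rewrite -/p -e.
have wk := max_principle j0 hP hI wp.
exists (w j0 0 * (1 - lam)).
rewrite vE /p wp {1 2}wk; apply/matrixP => i j; rewrite !mxE; ring.
Qed.

End Quad.
Section Dot.
Variables (R : realType) (d : nat).
Implicit Types (s t : 'cV[R]_d).

Lemma dotdC s t : dotd s t = dotd t s.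
Proof. by apply: eq_bigr => i _; rewrite mulrC. Qed.

Lemma dotdZl k s t : dotd (k *: s) t = k * dotd s t.
Proof. rewrite /dotd mulr_sumr; apply: eq_bigr => i _; rewrite !mxE; ring. Qed.

Lemma dotdBr s t1 t2 : dotd s (t1 - t2) = dotd s t1 - dotd s t2.
Proof.
rewrite /dotd -sumrB; apply: eq_bigr => i _; rewrite !mxE; ring.
Qed.

Lemma dotd0l t : dotd 0 t = 0.
Proof. by rewrite -(scale0r (0 : 'cV_d)) dotdZl mul0r. Qed.

Lemma dotd_ge0 s : 0 <= dotd s s.
Proof. by apply: sumr_ge0 => i _; rewrite -expr2 sqr_ge0. Qed.

Lemma dotd_eq0 s : dotd s s = 0 -> s = 0.
Proof.
move/eqP; rewrite psumr_eq0 => [/allP H|i _]; last by rewrite -expr2 sqr_ge0.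
apply/matrixP => i j; rewrite ord1 mxE.
by have := H i (mem_index_enum _); rewrite -expr2 sqrf_eq0 => /eqP.
Qed.

Lemma dotdE s t : dotd s t = (s^T *m t) 0 0.
Proof. by rewrite mxE; apply: eq_bigr => i _; rewrite mxE. Qed.

Lemma mx11M (A B : 'M[R]_1) : (A *m B) 0 0 = A 0 0 * B 0 0.
Proof. by rewrite mxE big_ord1. Qed.

End Dot.
Unset Implicit Arguments.

Theorem lemma3 (R : realType) (n d : nat)
  (P : 'M[R]_n) (Rv : 'cV[R]_n) (mu : 'rV[R]_n) (lam : R)
  (Phi : 'M[R]_(n, d)) :
  stochastic P -> irreducible P -> aperiodic P -> stationary_dist P mu ->
  0 <= lam -> lam < 1 ->
  \rank Phi = d ->
  exists theta_star : 'cV[R]_d,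
    E_Phi_e Phi theta_star /\
    is_projD mu (W_of Phi (E_Phi_e Phi))
      (bellman_lambda P mu Rv lam (Phi *m theta_star)) (Phi *m theta_star) /\
    (forall theta : 'cV[R]_d,
       is_projD mu (W_of Phi (E_Phi_e Phi))
         (bellman_lambda P mu Rv lam (Phi *m theta)) (Phi *m theta) ->
       theta = theta_star) /\
    (forall theta : 'cV[R]_d,
       is_projD mu (W_of Phi setT)
         (bellman_lambda P mu Rv lam (Phi *m theta)) (Phi *m theta) <->
       exists2 s, S_Phi_e Phi s & theta = theta_star + s).
Proof.
move=> hP hI _ hmu l0 l1 hr.
have n0 : (0 < n)%N.
  case: (posnP n) => // n0; exfalso.
  case: hmu => _ [hs _]; move: hs; rewrite big1 => [|i _]; last first.
    by have := ltn_ord i; rewrite {2}n0 ltn0.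
  by move/esym/eqP; rewrite oner_eq0.
pose j0 : 'I_n := Ordinal n0.
have hU := Nm_unit hP hI hmu l0 l1.
have inj : forall x y : 'cV[R]_d, Phi *m x = Phi *m y -> x = y.
  move=> x y h; apply/eqP; rewrite -subr_eq0; apply/eqP; apply: (rank_inj hr).
  by rewrite mulmxBr h subrr.
set c := cvec mu Rv.
set B := Bm P lam.
set L := Lm P lam.
have blE : forall v, bellman_lambda P mu Rv lam v = B *m c + L *m v.
  move=> v; rewrite bl_formula // mulmxDr -scalemxAr /L /Lm -scalemxAl mulmxA //.
pose a (th t : 'cV[R]_d) := inner_D mu (Phi *m th - L *m (Phi *m th)) (Phi *m t).
pose f (t : 'cV[R]_d) := inner_D mu (B *m c) (Phi *m t).
have resE : forall th t, inner_D mu (bellman_lambda P mu Rv lam (Phi *m th) - Phi *m th)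
    (Phi *m t) = f t - a th t.
  by move=> th t; rewrite blE -addrA -opprB innerDl innerNl.
have aB : forall th1 th2 t, a (th1 - th2) t = a th1 t - a th2 t.
  move=> th1 th2 t; rewrite /a -innerBl; congr (inner_D _ _ _).
  rewrite !mulmxBr; apply/matrixP => i j; rewrite !mxE; ring.
have a_ones : forall th k t, Phi *m th = k *: ones R n -> a th t = 0.
  move=> th k t h; rewrite /a h -scalemxAr L_ones // subrr inner0l //.
have a_onesr : forall th k t, Phi *m t = k *: ones R n -> a th t = 0.
  by move=> th k t h; rewrite /a h innerC inner_ones_L.
have f_ones : forall k t, Phi *m t = k *: ones R n -> f t = 0.
  by move=> k t h; rewrite /f h innerC inner_ones_Bc.
have coer : forall th, 0 <= a th th /\ (a th th = 0 -> exists k, Phi *m th = k *: ones R n).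
  by move=> th; apply: coercive.
have [rho [P1 [P2 [P3 P4]]]] : exists rho : 'cV[R]_d,
    (forall k, S_Phi_e Phi (k *: rho)) /\
    (forall s, S_Phi_e Phi s -> exists k, s = k *: rho) /\
    (forall s k, Phi *m s = k *: ones R n -> exists k', s = k' *: rho) /\
    (exists k, Phi *m rho = k *: ones R n).
  case: (pselect (exists te, Phi *m te = ones R n)) => [[te hte]|hno].
  - exists te; split.
      move=> k; exists 1%N, (fun _ => k), (fun _ => te); split => //.
      by rewrite big_ord1.
    split.
      move=> s [m [cc [vv [hv ->]]]]; exists (\sum_i cc i).
      rewrite scaler_suml; apply: eq_bigr => i _; congr (_ *: _).
      by apply: inj; rewrite hv hte.
    split.
      by move=> s k hs; exists k; apply: inj; rewrite -scalemxAr hte.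
    by exists 1; rewrite scale1r.
  - exists 0; split.
      move=> k; exists 0%N, (fun _ => 0), (fun _ => 0); split; first by case.
      by rewrite big_ord0 scaler0.
    split.
      move=> s [m [cc [vv [hv ->]]]]; exists 0; rewrite scaler0.
      by apply: big1 => i _; exfalso; apply: hno; exists (vv i).
    split.
      move=> s k hs; exists 0; rewrite scaler0.
      case: (eqVneq k 0) => [k0|kn0].
        by apply: (rank_inj hr); rewrite hs k0 scale0r.
      exfalso; apply: hno; exists (k^-1 *: s).
      by rewrite -scalemxAr hs scalerA mulVf // scale1r.
    by exists 0; rewrite mulmx0 scale0r.
have [k0 hk0] := P4.
have hE : forall t, E_Phi_e Phi t <-> dotd rho t = 0.
  move=> t; split.
    by move=> h; have := h _ (P1 1); rewrite scale1r.
  by move=> h s /P2 [k ->]; rewrite dotdZl h mulr0.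
have hZ : forall th, a th th = 0 -> exists k, th = k *: rho.
  move=> th h; have [_ /(_ h) [k hk]] := coer th; exact: P3 hk.
have hZ0 : forall th, a th th = 0 -> dotd rho th = 0 -> th = 0.
  move=> th h1 h2; have [k hk] := hZ th h1.
  move: h2; rewrite hk dotdC dotdZl => /eqP; rewrite mulf_eq0 => /orP [/eqP -> | /eqP h].
    by rewrite scale0r.
  by rewrite (dotd_eq0 h) scaler0.
pose Mm := Phi^T *m diag_mx mu *m ((1%:M - L) *m Phi).
pose qv := Phi^T *m diag_mx mu *m (B *m c).
have aE : forall th t, a th t = (t^T *m Mm *m th) 0 0.
  move=> th t; rewrite /a innerE trmx_mul /Mm.
  by rewrite mulmxBl mul1mx -!mulmxA mulmxBl -mulmxA.
have fE : forall t, f t = (t^T *m qv) 0 0.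
  by move=> t; rewrite /f innerE trmx_mul /qv -!mulmxA.
pose M' := Mm + rho *m rho^T.
have M'E : forall th t, (t^T *m M' *m th) 0 0 = a th t + dotd t rho * dotd rho th.
  move=> th t; rewrite /M' mulmxDr mulmxDl mxE aE; congr (_ + _).
  by rewrite !mulmxA -mulmxA mx11M -!dotdE.
have hinj : forall th : 'cV[R]_d, M' *m th = 0 -> th = 0.
  move=> th h.
  have := M'E th th; rewrite -mulmxA h mulmx0 mxE (dotdC th) => e.
  have [ge _] := coer th.
  have sq := sqr_ge0 (dotd rho th).
  have e2 : a th th + dotd rho th ^+ 2 = 0 by rewrite expr2 e.
  apply: hZ0.
    by apply/eqP; rewrite eq_le ge andbT -e2 lerDl.
  by apply/eqP; rewrite -sqrf_eq0 eq_le sq andbT -e2 lerDr.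
have hU' := unit_of_inj hinj.
pose ths := invmx M' *m qv.
have hths : M' *m ths = qv by rewrite /ths mulKVmx.
have hsol : forall t, a ths t + dotd t rho * dotd rho ths = f t.
  by move=> t; rewrite -M'E fE -mulmxA hths.
have hrho0 : dotd rho ths = 0.
  have := hsol rho; rewrite (a_onesr _ _ _ hk0) (f_ones _ _ hk0) add0r.
  move=> /eqP; rewrite mulf_eq0 => /orP [/eqP h|/eqP //].
  by rewrite (dotd_eq0 h) dotd0l.
have hfull : forall t, a ths t = f t.
  by move=> t; rewrite -hsol hrho0 mulr0 addr0.
exists ths; split; first by apply/hE.
split.
  split; first by exists ths => //; apply/hE.
  by move=> w [t _ <-]; rewrite resE hfull subrr.
split.
  move=> th [[t Et eqt] hort].
  have tE : t = th by apply: inj.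
  set del := th - ths.
  have hdel : dotd rho del = 0.
    by rewrite /del dotdBr hrho0 subr0 -tE; apply/hE.
  have := hort (Phi *m del); rewrite resE => /(_ (ex_intro2 _ _ del (proj2 (hE del) hdel) erefl)).
  rewrite -(hfull del) => e.
  have ad : a del del = 0 by rewrite /del aB; apply/eqP; rewrite -oppr_eq0 opprB e.
  by apply/eqP; rewrite -subr_eq0; apply/eqP; apply: hZ0.
move=> th; split.
  move=> [_ hort].
  have hall : forall t, a th t = f t.
    move=> t; have := hort (Phi *m t) (ex_intro2 _ _ t I erefl).
    by rewrite resE => /eqP; rewrite subr_eq0 => /eqP ->.
  have ad : a (th - ths) (th - ths) = 0 by rewrite aB hall hfull subrr.
  have [k hk] := hZ _ ad.
  exists (th - ths); first by rewrite hk; apply: P1.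
  by rewrite addrC subrK.
move=> [s Ss ->]; split; first by exists (ths + s).
move=> w [t _ <-]; rewrite resE.
have [k hk] := P2 s Ss.
have as0 : a s t = 0.
  by apply: (a_ones _ (k * k0)); rewrite hk -scalemxAr hk0 scalerA.
have : a (ths + s - s) t = a (ths + s) t - a s t by rewrite aB.
by rewrite addrK as0 subr0 hfull => <-; rewrite subrr.
Qed.
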